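(* The mapping which associates its code to a covered map is a bijection between covered maps with $n$ edges and code-shuffles of length $2n$ (on alphabets $A_k\uplus B_l$ with $k+l=n$). Moreover, if $w$ is the code of the covered map $(M,S)$, then $w_{|A}$ is the code of the unicellular map $M_{|S}$ (on the alphabet $A_{|S|/2}$) and $w_{|B}$ is the code of the dual unicellular map $M^*_{|\bar S}$ (on the alphabet $B_{|\bar S|/2}$).
   Context: Permutations compose right to left. A map is $M=(H,\sigma,\alpha)$, $H$ finite, $\alpha$ fixed-point-free involution, $\sigma$ a permutation, $\langle\sigma,\alpha\rangle$ transitive, with root $r\in H$, considered up to root-preserving relabelling; its face-permutation is $\phi=\sigma\alpha$; unicellular means $\phi$ is cyclic (the empty map counts as unicellular). For $S\subseteq H$, $\pi_{|S}$ is obtained from the cycles of $\pi$ by erasing elements not in $S$. A covered map is $(M,S)$ with $S$ stable by $\alpha$ such that $M_{|S}=(S,\sigma_{|S},\alpha_{|S})$ is a connecting unicellular map ($\sigma_{|S},\alpha_{|S}$ transitive on $S$, $S$ meets every cycle of $\sigma$ — $S=\emptyset$ allowed if $\sigma$ has one cycle — and $\sigma_{|S}\alpha_{|S}$ cyclic). Let $\bar S=H\setminus S$ and $M^*=(H,\phi,\alpha)$; $M^*_{|\bar S}=(\bar S,\phi_{|\bar S},\alpha_{|\bar S})$. The root of $M_{|S}$ is $\sigma^i(r)$ with $i\ge0$ least such that $\sigma^i(r)\in S$; the root of $M^*_{|\bar S}$ is $\phi^j(r)$ with $j\ge0$ least such that $\phi^j(r)\in\bar S$. The motion function is $\theta(h)=\sigma\alpha(h)$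 for $h\in S$ and $\theta(h)=\sigma(h)$ otherwise; it is cyclic when $(M,S)$ is covered. Let $A_n=\{a_1,\bar a_1,\dots,a_n,\bar a_n\}$. A unicellular code on $A_n$ is a word in which each letter of $A_n$ occurs exactly once and, for $1\le i<j\le n$, $a_i$ occurs before $\bar a_i$ and before $a_j$. The code of a unicellular map with $n$ edges is the unique word $w=w_1\cdots w_{2n}$ that is a unicellular code such that after relabelling the half-edges by $A_n$ one has $\alpha(a_i)=\bar a_i$, $\phi=(w_1,\dots,w_{2n})$ and $w_1$ is the root. With $B_l=\{b_1,\bar b_1,\dots,b_l,\bar b_l\}$, a word $w$ on $A_k\uplus B_l$ is a code-shuffle if its subwords $w_{|A}$ and $w_{|B}$ consisting of letters of $A_k$, resp. $B_l$, are unicellular codes. The code of a covered map $(M,S)$ with $k=|S|/2$, $l=|\bar S|/2$ is the unique code-shuffle $w=w_1\cdots w_{2n}$ such that after relabelling the half-edges by $A_k\uplus B_l$ one has $S=A_k$, $\bar S=B_l$, $\alpha(a_i)=\bar a_i$, $\alpha(b_i)=\bar b_i$, $\theta=(w_1,\dots,w_{2n})$ and $w_1$ is the root of $M$. *)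

(* Defs.v *)
From mathcomp Require Import all_boot all_fingroup.
Set Implicit Arguments. Unset Strict Implicit. Unset Printing Implicit Defensive.

(* A letter of A_n is (i, b): i in 1..n, b = false for a_i and b = true for abar_i. *)
Definition ltr := (nat * bool)%type.
Definition barL (x : ltr) : ltr := (x.1, ~~ x.2).

Definition alph (n : nat) : seq ltr :=
  flatten [seq [:: (i, false); (i, true)] | i <- iota 1 n].

Definition before (u : seq ltr) (x y : ltr) : Prop := index x u < index y u.

Definition is_ucode (n : nat) (u : seq ltr) : Prop :=
  perm_eq u (alph n) /\
  (forall i, 1 <= i <= n -> before u (i, false) (i, true)) /\
  (forall i j, 1 <= i -> i < j -> j <= n -> before u (i, false) (j, false)).

(* letters of A_k (+) B_l: (false, x) is x in A, (true, x) is x in B *)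
Definition sltr := (bool * ltr)%type.
Definition barS (x : sltr) : sltr := (x.1, barL x.2).
Definition subA (w : seq sltr) : seq ltr := [seq x.2 | x <- w & ~~ x.1].
Definition subB (w : seq sltr) : seq ltr := [seq x.2 | x <- w & x.1].

Definition code_shuffle (w : seq sltr) : Prop :=
  exists k l : nat, is_ucode k (subA w) /\ is_ucode l (subB w).

Definition restr (T : finType) (p : T -> T) (S : {set T}) (x : T) : T :=
  if x \in S then head x [seq y <- traject p (p x) #|T| | y \in S] else x.

Definition first_in (T : finType) (p : T -> T) (S : {set T}) (x : T) : T :=
  head x [seq y <- traject p x #|T| | y \in S].

Definition gen_rel (T : finType) (s a : T -> T) : rel T :=
  fun x y => (y == s x) || (y == a x).

Definition is_map (H : finType) (sigma alpha : {perm H}) : Prop :=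
  (forall h, alpha (alpha h) = h) /\ (forall h, alpha h != h) /\
  (forall x y, connect (gen_rel sigma alpha) x y).

Definition theta (H : finType) (sigma alpha : {perm H}) (S : {set H}) (h : H) : H :=
  if h \in S then sigma (alpha h) else sigma h.

Definition covered (H : finType) (sigma alpha : {perm H}) (r : H) (S : {set H}) : Prop :=
  is_map sigma alpha /\
  (forall h, (alpha h \in S) = (h \in S)) /\
  (forall x y, x \in S -> y \in S ->
     connect (gen_rel (restr sigma S) (restr alpha S)) x y) /\
  (S != set0 -> forall h, exists i, iter i sigma h \in S) /\
  (S = set0 -> forall x y, fconnect sigma x y) /\
  (forall x y, x \in S -> y \in S ->
     fconnect (restr sigma S \o restr alpha S) x y).

Definition code_of (H : finType) (sigma alpha : {perm H}) (r : H) (S : {set H})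
    (w : seq sltr) : Prop :=
  code_shuffle w /\
  exists f : H -> sltr,
    injective f /\ size w = #|H| /\ (forall h, f h \in w) /\
    (forall h, (f h).1 = (h \notin S)) /\
    (forall h, f (alpha h) = barS (f h)) /\
    (forall h, f (theta sigma alpha S h) = next w (f h)) /\
    ohead w = Some (f r).

(* u is the code of the unicellular map (D, s, a) rooted at r (face perm s o a),
   on the alphabet A_{|D|/2}; empty map has the empty code *)
Definition ucode_of (T : finType) (D : {set T}) (s a : T -> T) (r : T)
    (u : seq ltr) : Prop :=
  is_ucode (#|D| %/ 2) u /\
  exists f : T -> ltr,
    {in D &, injective f} /\ size u = #|D| /\ (forall h, h \in D -> f h \in u) /\
    (forall h, h \in D -> f (a h) = barL (f h)) /\
    (forall h, h \in D -> f (s (a h)) = next u (f h)) /\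
    (r \in D -> ohead u = Some (f r)).

Definition iso_covered (H1 H2 : finType)
    (sigma1 alpha1 : {perm H1}) (r1 : H1) (S1 : {set H1})
    (sigma2 alpha2 : {perm H2}) (r2 : H2) (S2 : {set H2}) : Prop :=
  exists g : H1 -> H2, bijective g /\
    (forall h, g (sigma1 h) = sigma2 (g h)) /\
    (forall h, g (alpha1 h) = alpha2 (g h)) /\
    g r1 = r2 /\ (forall h, (g h \in S2) = (h \in S1)).

(* Main.v *)
Require Import Defs.
From mathcomp Require Import all_boot all_fingroup zify.
Set Implicit Arguments. Unset Strict Implicit. Unset Printing Implicit Defensive.


Definition alphm m n : seq ltr :=
  flatten [seq [:: (i, false); (i, true)] | i <- iota m n].

Lemma mem_alphm m n l : (l \in alphm m n) = (m <= l.1 < m + n).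
Proof.
case: l => i b /=; apply/flatten_mapP/idP.
- case=> j; rewrite mem_iota => /andP[j1 jn]; rewrite !inE.
  by case/orP => /eqP [-> _]; apply/andP.
- move=> /andP[i0 iN]; exists i; first by rewrite mem_iota i0 iN.
  by case: b; rewrite !inE eqxx ?orbT.
Qed.

Lemma mem_alph n l : (l \in alph n) = (0 < l.1 <= n).
Proof. rewrite (mem_alphm 1 n l) add1n ltnS //. Qed.

Lemma uniq_alphm m n : uniq (alphm m n).
Proof.
elim: n m => [//|n IH] m; rewrite /alphm /= -/(alphm m.+1 n).
rewrite !inE !mem_alphm /= IH /= ltnn eqE /= andbF /=. lia. Qed.

Lemma uniq_alph n : uniq (alph n). Proof. exact: uniq_alphm. Qed.

Lemma size_alphm m n : size (alphm m n) = n.*2.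
Proof.
elim: n m => [//|n IH] m; rewrite /alphm /= -/(alphm m.+1 n) IH.
by rewrite doubleS.
Qed.

Lemma size_alph n : size (alph n) = n.*2. Proof. exact: size_alphm. Qed.

Lemma index_map_in (T U : eqType) (g : T -> U) (s : seq T) x :
  {in s &, injective g} -> x \in s -> index (g x) (map g s) = index x s.
Proof.
elim: s => [//|a t IH] inj xs /=.
have -> : (g a == g x) = (a == x).
  apply/eqP/eqP => [|->//]; apply: inj => //; exact: mem_head.
case: eqVneq => [//|ax]; congr S; apply: IH.
  by move=> y z yt zt; apply: inj; rewrite inE ?yt ?zt orbT.
by move: xs; rewrite inE eq_sym (negbTE ax).
Qed.

Lemma next_map_in (T U : eqType) (g : T -> U) (s : seq T) x :
  {in s &, injective g} -> x \in s -> next (map g s) (g x) = g (next s x).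
Proof.
move=> inj xs; rewrite !next_nth xs (map_f g xs).
rewrite (index_map_in inj xs).
case: s inj xs => [//|y t] inj xs /=.
case: (ltnP (if y == x then 0 else (index x t).+1) (size t)) => [lt|ge].
  by rewrite (nth_map y).
by rewrite !nth_default ?size_map.
Qed.

Lemma count_take_le (T : Type) (P : pred T) s i : count P (take i s) <= count P s.
Proof. by rewrite -{2}(cat_take_drop i s) count_cat leq_addr. Qed.

Lemma count_take_mono (T : Type) (P : pred T) s i j :
  i <= j -> count P (take i s) <= count P (take j s).
Proof. by move=> ij; rewrite -(take_takel s ij) count_take_le. Qed.

Lemma count_take_S (T : eqType) (P : pred T) s x : x \in s -> P x ->
  count P (take (index x s).+1 s) = (count P (take (index x s) s)).+1.
Proof.
move=> xs Px; rewrite (take_nth x); last by rewrite index_mem.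
by rewrite nth_index // -cats1 count_cat /= Px addn1.
Qed.

Lemma count_take_lt (T : eqType) (P : pred T) s x j : x \in s -> P x ->
  index x s < j -> count P (take (index x s) s) < count P (take j s).
Proof.
move=> xs Px lt; rewrite -ltnS -(count_take_S xs Px) ltnS.
exact: count_take_mono.
Qed.

Lemma count_ex (T : eqType) (P : pred T) s j : uniq s -> j < count P s ->
  exists x, [/\ x \in s, P x & count P (take (index x s) s) = j].
Proof.
elim: s j => [//|a t IH] j /= /andP[nat ut].
case Pa: (P a) => /=.
  case: j => [_|j]; first by exists a; rewrite mem_head eqxx take0.
  rewrite add1n ltnS => /(IH _ ut) [x [xt Px <-]].
  exists x; rewrite inE xt orbT; split => //.
  have -> : (a == x) = false by apply/eqP => ax; rewrite ax xt in nat.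
  by rewrite /= Pa.
rewrite add0n => /(IH _ ut) [x [xt Px <-]].
exists x; rewrite inE xt orbT; split => //.
have -> : (a == x) = false by apply/eqP => ax; rewrite ax xt in nat.
by rewrite /= Pa.
Qed.

Lemma index_lt_take (T : eqType) (u : seq T) p l :
  l \in take p u -> index l u < p.
Proof.
move=> lt; rewrite -(cat_take_drop p u) index_cat lt.
have := index_mem l (take p u); rewrite lt => h.
apply: leq_trans h _; rewrite size_take; case: ifP => //; lia.
Qed.

Lemma mem_take_index (T : eqType) (u : seq T) p x :
  x \in u -> index x u < p -> x \in take p u.
Proof.
move=> xu lt; rewrite -(nth_index x xu) -(nth_take x lt); apply: mem_nth.
rewrite size_take; case: ifP => // _; by rewrite index_mem.
Qed.

Lemma ucode_count k u i : is_ucode k u -> 0 < i <= k ->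
  count (fun l : ltr => ~~ l.2) (take (index (i, false) u) u) = i.-1.
Proof.
move=> [pu [Hb Hlt]] /andP[i0 ik].
have uu : uniq u by rewrite (perm_uniq pu) uniq_alph.
have iu : (i, false) \in u by rewrite (perm_mem pu) mem_alph /= i0 ik.
rewrite -size_filter (_ : i.-1 = size [seq (j, false) | j <- iota 1 i.-1]);
  last by rewrite size_map size_iota.
apply: perm_size; apply: uniq_perm.
- by apply: filter_uniq; apply: take_uniq.
- by rewrite map_inj_uniq ?iota_uniq // => a c [].
case=> j b; rewrite mem_filter /=; apply/andP/mapP.
- move=> [nb jt]; case: b nb jt => // _ jt; exists j => //.
  have ju := mem_take jt; move: (ju); rewrite (perm_mem pu) mem_alph /= => /andP[j0 jk].
  rewrite mem_iota j0 /=.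
  have lt := index_lt_take jt.
  case: (ltngtP j i) => [ji|ij|ij]; first lia.
  + move: (Hlt i j i0 ij jk) lt; rewrite /before; lia.
  + by move: lt; rewrite ij ltnn.
- case=> j'; rewrite mem_iota => /andP[j0 ji] [-> ->]; split => //.
  have jk : j' <= k by lia.
  apply: mem_take_index; first by rewrite (perm_mem pu) mem_alph /= j0 jk.
  by apply: Hlt => //; lia.
Qed.

Section Lab.
Variables (T : eqType) (al : T -> T).

Definition opener (s : seq T) x := index x s < index (al x) s.
Definition repr' s x := if opener s x then x else al x.
Definition lab s x : ltr :=
  ((count (opener s) (take (index (repr' s x) s) s)).+1, ~~ opener s x).

Variable s : seq T.
Hypotheses (Hs : uniq s) (Hcl : forall x, x \in s -> al x \in s)
  (Hinv : forall x, x \in s -> al (al x) = x)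
  (Hfix : forall x, x \in s -> al x != x).

Lemma index_inj_s x y : x \in s -> y \in s -> index x s = index y s -> x = y.
Proof. by move=> xs ys h; rewrite -(nth_index x xs) h nth_index. Qed.

Lemma opener_al x : x \in s -> opener s (al x) = ~~ opener s x.
Proof.
move=> xs; rewrite /opener Hinv //.
have ne : index (al x) s != index x s.
  by apply/eqP => /(index_inj_s (Hcl xs) xs) /eqP; apply/negP/Hfix.
by rewrite ltn_neqAle ne /= leqNgt.
Qed.

Lemma repr_al x : x \in s -> repr' s (al x) = repr' s x.
Proof.
move=> xs; rewrite /repr' opener_al //.
by case: (opener s x) => /=; rewrite ?Hinv.
Qed.

Lemma repr_op x : x \in s -> opener s (repr' s x) /\ repr' s x \in s.
Proof.
move=> xs; rewrite /repr'; case o: (opener s x); first by [].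
by rewrite opener_al // o Hcl.
Qed.

Lemma lab_al x : x \in s -> lab s (al x) = barL (lab s x).
Proof. by move=> xs; rewrite /lab /barL /= repr_al // opener_al. Qed.

Lemma openers_inj a b : a \in s -> b \in s -> opener s a -> opener s b ->
  count (opener s) (take (index a s) s) = count (opener s) (take (index b s) s) ->
  a = b.
Proof.
move=> xa xb oa ob h.
case: (ltngtP (index a s) (index b s)) => [lt|lt|eq].
- by have := count_take_lt xa oa lt; rewrite h ltnn.
- by have := count_take_lt xb ob lt; rewrite h ltnn.
- exact: index_inj_s.
Qed.

Lemma lab_inj : {in s &, injective (lab s)}.
Proof.
move=> x y xs ys [h1 h2].
have [ox rx] := repr_op xs; have [oy ry] := repr_op ys.
have := openers_inj rx ry ox oy h1.
rewrite /repr'; move: h2 => /negb_inj h2; rewrite h2.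
case: (opener s y) => // /(congr1 al); rewrite !Hinv //.
Qed.

Definition kk := count (opener s) s.

Lemma lab_range x : x \in s -> 0 < (lab s x).1 <= kk.
Proof.
move=> xs; have [o r] := repr_op xs; apply/andP; split => //=.
rewrite -(count_take_S r o); exact: count_take_le.
Qed.

Lemma ex_opener i : 0 < i <= kk ->
  exists x, [/\ x \in s, opener s x & lab s x = (i, false)].
Proof.
move=> /andP[i0 ik]; have [|x [xs o c]] := @count_ex _ (opener s) s i.-1 Hs.
  move: ik; rewrite /kk; lia.
exists x; split => //; rewrite /lab /repr' o c /=; congr pair; lia.
Qed.

Lemma index_lab x : x \in s -> index (lab s x) (map (lab s) s) = index x s.
Proof. move=> xs; exact: index_map_in lab_inj xs. Qed.

Lemma lab_ucode : is_ucode kk (map (lab s) s).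
Proof.
split; [|split].
- apply: uniq_perm; first by rewrite map_inj_in_uniq //; exact: lab_inj.
    exact: uniq_alph.
  case=> i b; rewrite mem_alph /=; apply/mapP/idP.
    by case=> x xs e; have := lab_range xs; rewrite -e.
  move/ex_opener => [x [xs o e]]; case: b.
    by exists (al x); rewrite ?Hcl // lab_al // e.
  by exists x.
- move=> i /ex_opener [x [xs o e]].
  have e2 : (i, true) = lab s (al x) by rewrite lab_al // e.
  by rewrite /before -e e2 !index_lab ?Hcl.
- move=> i j i1 ij jk.
  have [x [xs ox ex]] := @ex_opener i ltac:(lia).
  have [y [ys oy ey]] := @ex_opener j ltac:(lia).
  rewrite /before -ex -ey !index_lab //.
  rewrite ltnNge; apply/negP => le.
  have := count_take_mono (opener s) s le.
  move: ex ey; rewrite /lab /repr' ox oy => -[ei] [ej] h; lia.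
Qed.

Lemma lab_unique k (g : T -> ltr) : is_ucode k (map g s) -> {in s &, injective g} ->
  (forall x, x \in s -> g (al x) = barL (g x)) -> {in s, g =1 lab s}.
Proof.
move=> uc inj gal.
have uc' := uc; move: uc' => [pu [Hb Hlt]].
have gu : forall x, x \in s -> g x \in map g s by move=> x xs; exact: map_f.
have ga : forall x, x \in s -> 0 < (g x).1 <= k.
  by move=> x /gu; rewrite (perm_mem pu) mem_alph.
have im : forall x, x \in s -> index (g x) (map g s) = index x s.
  by move=> x xs; exact: index_map_in inj xs.
have st1 : forall x, x \in s -> (g x).2 = ~~ opener s x.
  move=> x xs; have gax := gal x xs; have gk := ga x xs.
  case ex: (g x) gax gk => [i b] gax /= ik; rewrite /barL /= in gax.
  have h := Hb i ik; rewrite /before in h.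
  case: b ex gax => ex gax /=.
    rewrite -ex -gax !im ?Hcl // in h.
    by rewrite /opener -leqNgt ltnW.
  by rewrite -ex -gax !im ?Hcl // in h; rewrite /opener h.
have st2 : forall y, y \in s -> opener s y ->
    (g y).1 = (count (opener s) (take (index y s) s)).+1.
  move=> y ys oy; have gy2 := st1 y ys; rewrite oy in gy2.
  have gk := ga y ys.
  have eg : g y = ((g y).1, false) by move: gy2; case: (g y) => ? ? /= ->.
  have := ucode_count uc gk; rewrite -eg im // -map_take count_map.
  rewrite (@eq_in_count _ _ (opener s)).
    move: gk; lia.
  by move=> z /mem_take zs /=; rewrite st1 ?negbK.
move=> x xs; rewrite /lab /repr'; case o: (opener s x).
  by rewrite [LHS]surjective_pairing st1 // st2 // o.
rewrite [LHS]surjective_pairing st1 // o -(st2 (al x)) ?Hcl ?opener_al ?o //.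
by rewrite gal.
Qed.
End Lab.

Section Cyc.
Variable T : finType.

Lemma TJ (p q : T -> T) (S : {set T}) a n :
  (forall z, z \notin S -> p z = q z) ->
  ohead [seq y <- traject p a n | y \in S] = ohead [seq y <- traject q a n | y \in S].
Proof.
move=> pq; elim: n a => [//|n IH] a /=.
case aS: (a \in S) => //=; rewrite pq ?aS //.
Qed.

Lemma self_in_traject (p : T -> T) x : injective p -> x \in traject p (p x) #|T|.
Proof.
move=> inj; apply/trajectP; exists (fingraph.order p x).-1.
  have : fingraph.order p x <= #|T|.
    by rewrite -size_orbit -(card_uniqP (fingraph.orbit_uniq p x)) max_card.
  have := fingraph.order_gt0 p x; lia.
by rewrite -iterSr orderSpred iter_order.
Qed.

Lemma next_head (y : T) t : next (y :: t) y = head y t.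
Proof. by case: t => [|z t] /=; rewrite eqxx. Qed.

Lemma head_rcons (y : T) t : head y (rcons t y) = head y t.
Proof. by case: t. Qed.

Lemma size_full (s : seq T) : uniq s -> (forall x, x \in s) -> size s = #|T|.
Proof.
move=> us full; rewrite -(card_uniqP us); apply: eq_card => x; by rewrite full.
Qed.

Lemma cycle_of (s : seq T) (p : T -> T) :
  uniq s -> (forall x, next s x = p x) -> fcycle p s.
Proof.
move=> us nx; rewrite -(@eq_cycle _ (frel (next s))) ?cycle_next //.
by move=> a b /=; rewrite nx.
Qed.

Lemma next_filter (s : seq T) (p : T -> T) (S : {set T}) y :
  uniq s -> (forall x, x \in s) -> (forall x, next s x = p x) -> y \in S ->
  next [seq z <- s | z \in S] y = restr p S y.
Proof.
move=> us full nx yS.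
have N := size_full us full.
have fy := full y; move: us full nx N; case/splitPr: fy => a b us full nx N.
rewrite filter_cat /= yS.
rewrite -(next_rot (size [seq z <- a | z \in S])); last first.
  by have := filter_uniq (fun z => z \in S) us; rewrite filter_cat /= yS.
rewrite rot_size_cat cat_cons next_head -filter_cat.
rewrite /restr yS.
set c := y :: b ++ a.
have cc : fcycle p c.
  have -> : c = rot (size a) (a ++ y :: b) by rewrite rot_size_cat.
  apply: cycle_of; first by rewrite rot_uniq.
  by move=> x; rewrite next_rot // nx.
have := fcycle_rconsE cc.
rewrite (_ : (size (b ++ a)).+2 = #|T|.+1); last by rewrite -N !size_cat /=; lia.
rewrite trajectS rcons_cons => -[<-].
by rewrite filter_rcons yS head_rcons.
Qed.

Lemma cycle_shape (s : seq T) (p : T -> T) r :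
  uniq s -> (forall x, x \in s) -> (forall x, next s x = p x) -> ohead s = Some r ->
  s = traject p r #|T|.
Proof.
move=> us full nx; case: s us full nx => [//|y t] us full nx [<-].
rewrite -(size_full us full) /=; exact: fcycle_consE (cycle_of us nx).
Qed.

Lemma fconnect_full (s : seq T) (p : T -> T) x y :
  uniq s -> (forall x, x \in s) -> (forall x, next s x = p x) -> fconnect p x y.
Proof.
move=> us full nx; by rewrite (fconnect_cycle (cycle_of us nx) (full x)) full.
Qed.

Lemma restr_in (p : T -> T) (S : {set T}) x : x \in S -> restr p S x \in S.
Proof.
move=> xS; rewrite /restr xS.
case e: [seq y <- traject p (p x) #|T| | y \in S] => [//|z l] /=.
have : z \in [seq y <- traject p (p x) #|T| | y \in S] by rewrite e mem_head.
by rewrite mem_filter => /andP[].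
Qed.

Lemma restr_conn (p : T -> T) (S : {set T}) x : fconnect p x (restr p S x).
Proof.
rewrite /restr; case: (x \in S) => //.
case e: [seq y <- traject p (p x) #|T| | y \in S] => [|z l] /=; first exact: connect0.
have : z \in [seq y <- traject p (p x) #|T| | y \in S] by rewrite e mem_head.
rewrite mem_filter => /andP[_ /trajectP [i _ ->]].
rewrite -iterSr; exact: fconnect_iter.
Qed.

Lemma RF (p q : T -> T) (S : {set T}) u v :
  u \in S -> v \in S -> p u = q v -> (forall z, z \notin S -> p z = q z) ->
  u \in traject p (p u) #|T| -> v \in traject q (q v) #|T| ->
  restr p S u = restr q S v.
Proof.
move=> uS vS e pq ut vt; rewrite /restr uS vS.
have := TJ (S:=S) (p u) #|T| pq; rewrite {2}e.
have : u \in [seq y <- traject p (p u) #|T| | y \in S] by rewrite mem_filter uS.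
have : v \in [seq y <- traject q (q v) #|T| | y \in S] by rewrite mem_filter vS.
case: [seq y <- traject q (q v) #|T| | y \in S] => //.
case: [seq y <- traject p (p u) #|T| | y \in S] => //.
by move=> ? ? ? ? _ _ /= [].
Qed.

Lemma restr_fix (a : T -> T) (S : {set T}) x :
  x \in S -> a x \in S -> restr a S x = a x.
Proof.
move=> xS axS; rewrite /restr xS.
have : 0 < #|T| by apply/card_gt0P; exists x.
by case: #|T| => //= n _; rewrite axS.
Qed.

End Cyc.

Section D.
Variable H : finType.

Lemma code_cycle (th : H -> H) (f : H -> sltr) w r :
  injective f -> size w = #|H| -> (forall h, f h \in w) ->
  (forall h, f (th h) = next w (f h)) -> ohead w = Some (f r) ->
  exists s, [/\ uniq s, forall x, x \in s, forall x, next s x = th x,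
     ohead s = Some r & w = map f s].
Proof.
move=> inj sz mem nx hd.
have u1 : uniq (map f (enum H)) by rewrite map_inj_uniq // enum_uniq.
have sub : {subset map f (enum H) <= w} by move=> l /mapP [h _ ->].
have le : size w <= size (map f (enum H)) by rewrite sz size_map cardE.
have [_ eqm] := uniq_min_size u1 sub le.
have uw := leq_size_uniq u1 sub le.
have ex : forall l, l \in w -> exists h, f h = l.
  by move=> l; rewrite -eqm => /mapP [h _ ->]; exists h.
pose finv l := odflt r [pick h | f h == l].
have finvK : forall l, l \in w -> f (finv l) = l.
  move=> l /ex [h e]; rewrite /finv; case: pickP => [h' /eqP //|/(_ h)].
  by rewrite e eqxx.
have ew : w = map f (map finv w).
  by rewrite -map_comp -[LHS]map_id; apply/eq_in_map => l /finvK.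
have us : uniq (map finv w) by rewrite -(map_inj_uniq inj) -ew.
exists (map finv w); split => //.
- by move=> x; have := mem x; rewrite {1}ew mem_map.
- by move=> x; apply: (inj); rewrite nx -(next_map inj us) -ew.
- by move: hd; rewrite {1}ew; case: (map finv w) => //= a _ [/inj ->].
Qed.

Definition beta (al : H -> H) (S : {set H}) h := if h \in S then al h else h.

Lemma betaK (al : H -> H) (S : {set H}) : (forall h, al (al h) = h) ->
  (forall h, (al h \in S) = (h \in S)) -> involutive (beta al S).
Proof. by move=> aK st h; rewrite /beta; case hS: (h \in S); rewrite ?st hS ?aK. Qed.

Lemma theta_beta (sg al : {perm H}) (S : {set H}) h : theta sg al S h = sg (beta al S h).
Proof. by rewrite /theta /beta; case: ifP. Qed.

Lemma theta_inj (sg al : {perm H}) (S : {set H}) : (forall h, al (al h) = h) ->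
  (forall h, (al h \in S) = (h \in S)) -> injective (theta sg al S).
Proof.
move=> aK st x y; rewrite !theta_beta => /perm_inj.
exact: (can_inj (betaK aK st)).
Qed.

Lemma sigma_theta (sg al : {perm H}) (S : {set H}) h : (forall h, al (al h) = h) ->
  (forall h, (al h \in S) = (h \in S)) -> sg h = theta sg al S (beta al S h).
Proof. by move=> aK st; rewrite theta_beta betaK. Qed.

Lemma iter_agree (p q : H -> H) (S : {set H}) h i :
  (forall z, z \notin S -> p z = q z) -> (forall j, j < i -> iter j q h \notin S) ->
  iter i p h = iter i q h.
Proof.
move=> pq; elim: i => [//|i IH] hj /=.
rewrite IH ?pq ?hj // => j ji; apply: hj; lia.
Qed.

Lemma fconnect_transfer (f g : H -> H) (A : {set H}) x y :
  {in A, f =1 g} -> (forall z, z \in A -> f z \in A) -> x \in A ->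
  fconnect f x y -> fconnect g x y.
Proof.
move=> e cl xA /iter_findex <-.
suff : forall k, iter k f x \in A /\ iter k f x = iter k g x.
  by move=> h; rewrite (h _).2; exact: fconnect_iter.
elim=> [//|k [IA IE]] /=; split; first exact: cl.
by rewrite e // IE.
Qed.

Lemma fconnect_lift (F p : H -> H) x y :
  (forall z, fconnect p z (F z)) -> fconnect F x y -> fconnect p x y.
Proof. by move=> h; apply: connect_sub => a b /eqP <-. Qed.

Lemma covered_cyc (sg al : {perm H}) r (S : {set H}) :
  covered sg al r S -> forall x y, fconnect (theta sg al S) x y.
Proof.
move=> [[aK [afix conn]] [stab [trans [meet [empty cyc]]]]].
set th := theta sg al S; have thi : injective th := theta_inj aK stab.
case: (eqVneq S set0) => [S0|Sn0].
  move=> x y; rewrite (@eq_fconnect _ th sg) ?empty // => z.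
  by rewrite /th /theta S0 inE.
have key1 : forall x y, x \in S -> y \in S -> fconnect th x y.
  move=> x y xS yS; apply: (@fconnect_lift (restr th S)); first exact: restr_conn.
  apply: (@fconnect_transfer (restr sg S \o restr al S) _ S) => //.
  - move=> z zS /=; rewrite (@restr_fix _ al S z) ?stab //; symmetry; apply: RF => //.
    + by rewrite stab.
    + by rewrite /th /theta zS.
    + by move=> u uS; rewrite /th /theta (negbTE uS).
    + exact: self_in_traject.
    + exact: self_in_traject (@perm_inj _ sg).
  - by move=> z zS /=; apply: restr_in; apply: restr_in.
  - exact: cyc.
have key2 : forall h, exists2 z, z \in S & fconnect th h z.
  move=> h; have ex := meet Sn0 h.
  case: (ex_minnP ex) => i iS imin; exists (iter i sg h) => //.
  rewrite -(@iter_agree th sg S) ?fconnect_iter //.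
    by move=> z zS; rewrite /th /theta (negbTE zS).
  by move=> j ji; apply/negP => jS; have := imin j jS; lia.
move=> x y; case: (key2 x) => zx zxS cx; case: (key2 y) => zy zyS cy.
apply: connect_trans cx _; apply: connect_trans (key1 _ _ zxS zyS) _.
by rewrite fconnect_sym.
Qed.

Lemma subA_map (f : H -> sltr) s (S : {set H}) : (forall h, (f h).1 = (h \notin S)) ->
  subA (map f s) = map (fun h => (f h).2) [seq z <- s | z \in S].
Proof.
move=> fe; rewrite /subA filter_map -map_comp; congr map.
by apply: eq_filter => z /=; rewrite fe negbK.
Qed.

Lemma subB_map (f : H -> sltr) s (S : {set H}) : (forall h, (f h).1 = (h \notin S)) ->
  subB (map f s) = map (fun h => (f h).2) [seq z <- s | z \in ~: S].
Proof.
move=> fe; rewrite /subB filter_map -map_comp; congr map.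
by apply: eq_filter => z /=; rewrite fe inE.
Qed.

End D.

Section E.
Variable H : finType.

Lemma part4gen (th ph al : H -> H) (P : {set H}) (s : seq H) r (g : H -> ltr) k :
  uniq s -> (forall x, x \in s) -> (forall x, next s x = th x) -> ohead s = Some r ->
  injective th -> injective ph ->
  (forall h, al (al h) = h) -> (forall h, (al h \in P) = (h \in P)) ->
  (forall z, z \notin P -> th z = ph z) -> (forall z, z \in P -> th z = ph (al z)) ->
  {in P &, injective g} -> (forall h, h \in P -> g (al h) = barL (g h)) ->
  is_ucode k (map g [seq z <- s | z \in P]) ->
  ucode_of P (restr ph P) (restr al P) (first_in ph P r) (map g [seq z <- s | z \in P]).
Proof.
move=> us full nx hd thi phi aK st off on ginj gal uc.
have usP : uniq [seq z <- s | z \in P] := filter_uniq _ us.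
have memP : forall z, (z \in [seq z <- s | z \in P]) = (z \in P).
  by move=> z; rewrite mem_filter full andbT.
have szP : size [seq z <- s | z \in P] = #|P|.
  by rewrite -(card_uniqP usP); apply: eq_card => z; exact: memP.
have ginjs : {in [seq z <- s | z \in P] &, injective g}.
  by move=> a b; rewrite !memP; exact: ginj.
split.
  have := perm_size uc.1; rewrite size_map szP size_alph => ->.
  by rewrite divn2 doubleK.
exists g; split; [|split; [|split; [|split; [|split]]]].
- exact: ginj.
- by rewrite size_map szP.
- by move=> h hP; apply: map_f; rewrite memP.
- by move=> h hP; rewrite restr_fix ?st // gal.
- move=> h hP; rewrite (@restr_fix _ al P h) ?st //.
  rewrite next_map_in ?memP // (next_filter us full nx hP).
  congr g; symmetry; apply: RF => //;
    first [ by rewrite st | exact: on | exact: self_in_traject ].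
- move=> rP; rewrite (cycle_shape us full nx hd).
  rewrite /first_in in rP *.
  have := @TJ _ th ph P r #|H| off.
  case e: [seq y <- traject ph r #|H| | y \in P] => [|a l] /=.
    exfalso; move: rP; rewrite e /= => rP.
    have : r \in [seq y <- traject ph r #|H| | y \in P].
      rewrite mem_filter rP /=.
      have : 0 < #|H| by apply/card_gt0P; exists r.
      by case: #|H| => //= n _; rewrite mem_head.
    by rewrite e.
  by case: [seq y <- traject th r #|H| | y \in P] => //= b l' [->].
Qed.

Lemma class_hyps (al : H -> H) (P : {set H}) s : uniq s -> (forall x, x \in s) ->
  (forall h, al (al h) = h) -> (forall h, al h != h) ->
  (forall h, (al h \in P) = (h \in P)) ->
  [/\ uniq [seq z <- s | z \in P],
      forall x, x \in [seq z <- s | z \in P] -> al x \in [seq z <- s | z \in P],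
      forall x, x \in [seq z <- s | z \in P] -> al (al x) = x &
      forall x, x \in [seq z <- s | z \in P] -> al x != x].
Proof.
move=> us full aK afix st; split => //; first exact: filter_uniq.
by move=> x; rewrite !mem_filter st !full.
Qed.

End E.

Section F.
Variable H : finType.

Lemma part1 (sg al : {perm H}) r (S : {set H}) :
  covered sg al r S -> exists! w, code_of sg al r S w.
Proof.
move=> cov; have [[aK [afix _]] [st _]] := cov.
set th := theta sg al S; have thi : injective th := theta_inj aK st.
have fullc := covered_cyc cov.
set s := fingraph.orbit th r.
have us : uniq s := fingraph.orbit_uniq th r.
have fs : forall x, x \in s by move=> x; rewrite -fconnect_orbit fullc.
have ns : forall x, next s x = th x.
  by move=> x; apply/esym/eqP; exact: (next_cycle (cycle_orbit thi r) (fs x)).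
have hs : ohead s = Some r by rewrite /s /fingraph.orbit -orderSpred.
have stC : forall h, (al h \in ~: S) = (h \in ~: S) by move=> h; rewrite !inE st.
have [uA clA invA fixA] := class_hyps (P := S) us fs aK afix st.
have [uB clB invB fixB] := class_hyps (P := ~: S) us fs aK afix stC.
set sA := [seq z <- s | z \in S] in uA clA invA fixA *.
set sB := [seq z <- s | z \in ~: S] in uB clB invB fixB *.
have mA : forall z, (z \in sA) = (z \in S) by move=> z; rewrite mem_filter fs andbT.
have mB : forall z, (z \in sB) = (z \notin S) by move=> z; rewrite mem_filter fs andbT inE.
pose fw h : sltr := (h \notin S, if h \in S then lab al sA h else lab al sB h).
have fw1 : forall h, (fw h).1 = (h \notin S) by [].
have fwinj : injective fw.
  move=> x y [e1]; move: e1 => /negb_inj e1; rewrite -e1.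
  case xS: (x \in S) => e2.
    by apply: (lab_inj clA invA fixA); rewrite ?mA // -e1.
  by apply: (lab_inj clB invB fixB); rewrite ?mB ?xS // -e1 xS.
have fwal : forall h, fw (al h) = barS (fw h).
  move=> h; rewrite /fw /barS /= st; case hS: (h \in S) => /=.
    by rewrite (lab_al clA invA fixA) ?mA.
  by rewrite (lab_al clB invB fixB) ?mB ?hS.
exists (map fw s); split.
  split.
    exists (kk al sA), (kk al sB); rewrite (subA_map _ (S := S)) // (subB_map _ (S := S)) //; split.
      have -> : [seq (fw h).2 | h <- sA] = map (lab al sA) sA.
        by apply/eq_in_map => h; rewrite mA /fw => ->.
      exact: lab_ucode.
    have -> : [seq (fw h).2 | h <- sB] = map (lab al sB) sB.
      by apply/eq_in_map => h; rewrite mB /fw => /negbTE ->.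
    exact: lab_ucode.
  exists fw; split => //; split; first by rewrite size_map; exact: size_full.
  split; first by move=> h; apply: map_f.
  split => //; split => //; split.
    by move=> h; rewrite (next_map fwinj us) ns.
  have [a [l e]] : exists a l, s = a :: l by case: (s) hs => [//|a l] _; exists a, l.
  by move: hs; rewrite e /= => -[->].
move=> w' [[k1 [k2 [ucA ucB]]] [f' [i' [sz' [m' [fst' [al' [th' hd']]]]]]]].
have [s' [us' fs' ns' hs' ew']] := code_cycle i' sz' m' th' hd'.
have ss : s' = s by rewrite (cycle_shape us' fs' ns' hs') (cycle_shape us fs ns hs).
rewrite ew' ss; apply: eq_map => h.
have gA : {in sA, (fun h => (f' h).2) =1 lab al sA}.
  apply: (lab_unique uA clA invA fixA (k := k1)).
  - by rewrite -(subA_map _ (S := S)) // -ss -ew'.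
  - move=> a b; rewrite !mA => aS bS e; apply: i'.
    by rewrite [f' a]surjective_pairing [f' b]surjective_pairing !fst' aS bS e.
  - by move=> x _; rewrite al'.
have gB : {in sB, (fun h => (f' h).2) =1 lab al sB}.
  apply: (lab_unique uB clB invB fixB (k := k2)).
  - by rewrite -(subB_map _ (S := S)) // -ss -ew'.
  - move=> a b; rewrite !mB => aS bS e; apply: i'.
    by rewrite [f' a]surjective_pairing [f' b]surjective_pairing !fst' aS bS e.
  - by move=> x _; rewrite al'.
rewrite [f' h]surjective_pairing fst' /fw; case hS: (h \in S).
  by rewrite gA ?mA.
by rewrite gB ?mB ?hS.
Qed.

End F.

Lemma part2 (H1 H2 : finType) (sigma1 alpha1 : {perm H1}) (r1 : H1) (S1 : {set H1})
          (sigma2 alpha2 : {perm H2}) (r2 : H2) (S2 : {set H2}) (w : seq sltr) :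
  covered sigma1 alpha1 r1 S1 -> covered sigma2 alpha2 r2 S2 ->
  code_of sigma1 alpha1 r1 S1 w -> code_of sigma2 alpha2 r2 S2 w ->
  iso_covered sigma1 alpha1 r1 S1 sigma2 alpha2 r2 S2.
Proof.
move=> [[aK1 _] [st1 _]] [[aK2 _] [st2 _]].
move=> [_ [f1 [i1 [sz1 [m1 [fs1 [al1 [th1 hd1]]]]]]]].
move=> [_ [f2 [i2 [sz2 [m2 [fs2 [al2 [th2 hd2]]]]]]]].
have [s1 [_ _ _ _ e1]] := code_cycle i1 sz1 m1 th1 hd1.
have [s2 [_ _ _ _ e2]] := code_cycle i2 sz2 m2 th2 hd2.
have ex2 : forall h, exists h2, f2 h2 = f1 h.
  by move=> h; have := m1 h; rewrite e2 => /mapP [h2 _ ->]; exists h2.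
have ex1 : forall h, exists h1, f1 h1 = f2 h.
  by move=> h; have := m2 h; rewrite e1 => /mapP [h1 _ ->]; exists h1.
pose g h := odflt r2 [pick h2 | f2 h2 == f1 h].
pose g' h := odflt r1 [pick h1 | f1 h1 == f2 h].
have gE : forall h, f2 (g h) = f1 h.
  move=> h; rewrite /g; case: pickP => [h2 /eqP //|].
  by case: (ex2 h) => h2 e /(_ h2); rewrite e eqxx.
have gE' : forall h, f1 (g' h) = f2 h.
  move=> h; rewrite /g'; case: pickP => [h1 /eqP //|].
  by case: (ex1 h) => h1 e /(_ h1); rewrite e eqxx.
have gS : forall h, (g h \in S2) = (h \in S1).
  by move=> h; apply: negb_inj; rewrite -fs1 -fs2 gE.
have ga : forall h, f2 (alpha2 (g h)) = f1 (alpha1 h) by move=> h; rewrite al2 al1 gE.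
have gb : forall h, f2 (beta alpha2 S2 (g h)) = f1 (beta alpha1 S1 h).
  by move=> h; rewrite /beta gS; case: ifP => _; rewrite ?ga ?gE.
exists g; split.
  by exists g' => h; [apply: (i1); rewrite gE' gE | apply: (i2); rewrite gE gE'].
split.
  move=> h; apply: (i2); rewrite gE (@sigma_theta _ sigma1 alpha1 S1 h aK1 st1).
  by rewrite (@sigma_theta _ sigma2 alpha2 S2 (g h) aK2 st2) th1 th2 gb.
split; first by move=> h; apply: (i2); rewrite gE ga.
split; last exact: gS.
by apply: (i2); rewrite gE; move: hd1; rewrite hd2 => -[].
Qed.

Lemma part4 (H : finType) (sigma alpha : {perm H}) (r : H) (S : {set H}) (w : seq sltr) :
  covered sigma alpha r S -> code_of sigma alpha r S w ->
  ucode_of S (restr sigma S) (restr alpha S) (first_in sigma S r) (subA w) /\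
  ucode_of (~: S) (restr (sigma \o alpha) (~: S)) (restr alpha (~: S))
           (first_in (sigma \o alpha) (~: S) r) (subB w).
Proof.
move=> [[aK [afix _]] [st _]] [[k1 [k2 [ucA ucB]]] [f [i [sz [m [fst [alf [thf hd]]]]]]]].
have [s [us fs ns hs ew]] := code_cycle i sz m thf hd.
have thi : injective (theta sigma alpha S) := theta_inj aK st.
rewrite ew (subA_map _ (S := S)) // (subB_map _ (S := S)) //.
rewrite ew (subA_map _ (S := S)) // (subB_map _ (S := S)) // in ucA ucB.
have stC : forall h, (alpha h \in ~: S) = (h \in ~: S) by move=> h; rewrite !inE st.
have ginj : forall P : {set H}, {in P &, injective (fun h => (f h).2)} ->
   {in P &, injective (fun h => (f h).2)} by [].
split.
  apply: (part4gen us fs ns hs thi (@perm_inj _ sigma) aK st _ _ _ _ ucA).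
  - by move=> z zS; rewrite /theta (negbTE zS).
  - by move=> z zS; rewrite /theta zS.
  - move=> a b aS bS e; apply: (i).
    by rewrite [f a]surjective_pairing [f b]surjective_pairing !fst aS bS e.
  - by move=> h _; rewrite alf.
have phi : injective (sigma \o alpha) := inj_comp (@perm_inj _ sigma) (@perm_inj _ alpha).
apply: (part4gen us fs ns hs thi phi aK stC _ _ _ _ ucB).
- by move=> z; rewrite inE negbK => zS; rewrite /theta zS.
- by move=> z; rewrite inE => zS; rewrite /theta (negbTE zS) /= aK.
- move=> a b; rewrite !inE => aS bS e; apply: (i).
  by rewrite [f a]surjective_pairing [f b]surjective_pairing !fst aS bS e.
- by move=> h _; rewrite alf.
Qed.

Lemma covered_of_cycle (H : finType) (sg al : {perm H}) r (S : {set H}) s :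
  (forall h, al (al h) = h) -> (forall h, al h != h) ->
  (forall h, (al h \in S) = (h \in S)) ->
  uniq s -> (forall x, x \in s) -> (forall x, next s x = theta sg al S x) ->
  covered sg al r S.
Proof.
move=> aK afix st us full ns.
set th := theta sg al S.
have thi : injective th := theta_inj aK st.
have thc : forall x y, fconnect th x y by move=> x y; exact: fconnect_full us full ns.
have step : forall a, connect (gen_rel sg al) a (th a).
  move=> a; rewrite /th /theta; case: (a \in S).
    apply: (connect_trans (@connect1 _ _ a (al a) _) (connect1 _));
      by rewrite /gen_rel eqxx ?orbT.
  by apply: connect1; rewrite /gen_rel eqxx.
have lift : forall x y, fconnect th x y -> connect (gen_rel sg al) x y.
  by move=> x y; apply: connect_sub => a b /eqP <-; exact: step.
have cycS : forall x y, x \in S -> y \in S -> fconnect (restr sg S \o restr al S) x y.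
  move=> x y xS yS.
  set sA := [seq z <- s | z \in S].
  have uA : uniq sA := filter_uniq _ us.
  have mA : forall z, (z \in sA) = (z \in S) by move=> z; rewrite mem_filter full andbT.
  apply: (@fconnect_transfer _ (restr th S) _ S) => //.
  - move=> z zS /=; rewrite (@restr_fix _ al S z) ?st //; apply: RF => //;
      first [ by rewrite st | by rewrite /th /theta zS
            | by move=> u uS; rewrite /th /theta (negbTE uS)
            | exact: self_in_traject | exact: self_in_traject (@perm_inj _ sg) ].
  - by move=> z zS; apply: restr_in.
  apply: (@fconnect_transfer _ (next sA) _ S) => //.
  - by move=> z zS; rewrite (next_filter us full ns).
  - by move=> z; rewrite -!mA mem_next.
  by rewrite (fconnect_cycle (cycle_next uA)) ?mA.
split; first by split => //; split => // x y; apply: lift.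
split => //; split.
  move=> x y xS yS; apply: connect_sub (cycS x y xS yS) => a b /eqP <- /=.
  apply: (connect_trans (@connect1 _ _ a (restr al S a) _) (connect1 _));
    by rewrite /gen_rel eqxx ?orbT.
split.
  move=> Sn0 h; case/set0Pn: Sn0 => z zS.
  have := iter_findex (thc h z); set k := findex th h z => ez.
  case: (boolP [exists j : 'I_k, iter j sg h \in S]).
    by case/existsP => j jS; exists j.
  move=> nex; exists k; rewrite -(@iter_agree _ th sg S) ?ez //.
    by move=> u uS; rewrite /th /theta (negbTE uS).
  move=> j jk; apply/negP => jS; move/existsP: nex; apply.
  by exists (Ordinal jk).
split; last exact: cycS.
move=> S0 x y; rewrite -(@eq_fconnect _ th sg) // => z.
by rewrite /th /theta S0 inE.
Qed.

Lemma ucode_uniq k u : is_ucode k u -> uniq u.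
Proof. by case=> pu _; rewrite (perm_uniq pu) uniq_alph. Qed.

Lemma uniq_split (w : seq sltr) : uniq (subA w) -> uniq (subB w) -> uniq w.
Proof.
elim: w => [//|[c x] t IH]; rewrite /subA /subB /=.
case: c => /=.
  move=> uA /andP[xB uB]; rewrite IH // andbT; apply: contra xB => xt.
  by apply/mapP; exists (true, x); rewrite // mem_filter.
move=> /andP[xA uA] uB; rewrite IH // andbT; apply: contra xA => xt.
by apply/mapP; exists (false, x); rewrite // mem_filter.
Qed.

Lemma memA (w : seq sltr) x : (x \in subA w) = ((false, x) \in w).
Proof.
apply/mapP/idP => [[[c y]]|xw]; last by exists (false, x); rewrite // mem_filter.
by rewrite mem_filter /= => /andP[]; case: c => //= _ yw ->.
Qed.

Lemma memB (w : seq sltr) x : (x \in subB w) = ((true, x) \in w).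
Proof.
apply/mapP/idP => [[[c y]]|xw]; last by exists (true, x); rewrite // mem_filter.
by rewrite mem_filter /= => /andP[]; case: c => //= _ yw ->.
Qed.

Lemma bar_in w l : code_shuffle w -> l \in w -> barS l \in w.
Proof.
move=> [k1 [k2 [[pA _] [pB _]]]]; case: l => [[] x] xw; rewrite /barS /=.
  rewrite -memB (perm_mem pB) mem_alph /=.
  by rewrite -mem_alph -(perm_mem pB) memB.
rewrite -memA (perm_mem pA) mem_alph /=.
by rewrite -mem_alph -(perm_mem pA) memA.
Qed.

Lemma barSK : involutive barS.
Proof. by case=> c [i b]; rewrite /barS /barL /= negbK. Qed.

Lemma barS_neq l : barS l != l.
Proof. by case: l => c [i b]; rewrite /barS /barL /= !xpair_eqE !eqxx /=; case: b. Qed.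

Lemma next_nth_mod (w : seq sltr) x0 i : uniq w -> i < size w ->
  next w (nth x0 w i) = nth x0 w (i.+1 %% size w).
Proof.
move=> uw iw; rewrite next_nth mem_nth // index_uniq //.
case: w uw iw => [//|y t] /= uw iw.
case: (ltnP i (size t)) => [lt|ge].
  by rewrite modn_small // (set_nth_default x0).
have -> : i = size t by lia.
by rewrite modnn nth_default.
Qed.

Lemma part3 (n : nat) : 0 < n -> forall w : seq sltr, code_shuffle w -> size w = n.*2 ->
     exists (H : finType) (sigma alpha : {perm H}) (r : H) (S : {set H}),
       covered sigma alpha r S /\ #|H| = n.*2 /\ code_of sigma alpha r S w.
Proof.
move=> n0 w cs sw.
have uw : uniq w.
  by case: cs => k1 [k2 [uA uB]]; exact: uniq_split (ucode_uniq uA) (ucode_uniq uB).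
set N := size w.
have N0 : 0 < N by rewrite /N sw; lia.
pose x0 : sltr := (false, (0, false)).
pose lt (i : 'I_N) := nth x0 w i.
have ltinj : injective lt.
  move=> i j /eqP; rewrite /lt nth_uniq // => /eqP; exact: val_inj.
have aP : forall i : 'I_N, index (barS (lt i)) w < N.
  by move=> i; rewrite index_mem; apply: bar_in cs _; apply: mem_nth.
pose alf (i : 'I_N) : 'I_N := Ordinal (aP i).
have ltal : forall i, lt (alf i) = barS (lt i).
  by move=> i; rewrite /lt /= nth_index //; apply: bar_in cs _; exact: mem_nth.
have alinj : injective alf.
  by move=> i j e; apply: (ltinj); apply: (can_inj barSK); rewrite -!ltal e.
pose alpha := perm alinj.
have ltA : forall i, lt (alpha i) = barS (lt i) by move=> i; rewrite permE ltal.
pose S := [set i | ~~ (lt i).1].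
have aK : forall i, alpha (alpha i) = i by move=> i; apply: (ltinj); rewrite !ltA barSK.
have afix : forall i, alpha i != i.
  by move=> i; apply/eqP => e; have := barS_neq (lt i); rewrite -ltA e eqxx.
have st : forall i, (alpha i \in S) = (i \in S) by move=> i; rewrite !inE ltA.
pose sgf (i : 'I_N) := ordS (beta alpha S i).
have sginj : injective sgf.
  by move=> i j /ordS_inj; exact: (can_inj (betaK aK st)).
pose sigma := perm sginj.
have thE : forall i, theta sigma alpha S i = ordS i.
  by move=> i; rewrite theta_beta permE /sgf betaK.
have ltS : forall i, lt (ordS i) = next w (lt i).
  by move=> i; rewrite /lt next_nth_mod.
pose s := enum 'I_N.
have ws : w = map lt s.
  rewrite /s -[map lt _]/(map (nth x0 w \o val) _) map_comp val_enum_ord.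
  by rewrite -/(mkseq _ _) mkseq_nth.
have ns : forall x, next s x = theta sigma alpha S x.
  move=> x; apply: (ltinj); rewrite thE ltS ws (next_map ltinj) //.
  exact: enum_uniq.
exists 'I_N, sigma, alpha, (Ordinal N0), S.
split; first by apply: (@covered_of_cycle _ sigma alpha _ S s) => //;
  [exact: enum_uniq | exact: mem_enum].
split; first by rewrite card_ord.
split => //; exists lt; split => //.
split; first by rewrite card_ord.
split; first by move=> h; apply: mem_nth.
split; first by move=> h; rewrite inE negbK.
split; first exact: ltA.
split; first by move=> h; rewrite thE ltS.
have oh : forall v : seq sltr, 0 < size v -> ohead v = Some (nth x0 v 0) by case.
exact: oh.
Qed.
Theorem mainTheorem8 (n : nat) :
  (* the code is well defined: each covered map with n edges has a unique code *)
  (forall (H : finType) (sigma alpha : {perm H}) (r : H) (S : {set H}),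
     covered sigma alpha r S -> #|H| = n.*2 ->
     exists! w, code_of sigma alpha r S w) /\
  (* injectivity (up to root-preserving relabelling) *)
  (forall (H1 H2 : finType) (sigma1 alpha1 : {perm H1}) (r1 : H1) (S1 : {set H1})
          (sigma2 alpha2 : {perm H2}) (r2 : H2) (S2 : {set H2}) (w : seq sltr),
     covered sigma1 alpha1 r1 S1 -> #|H1| = n.*2 ->
     covered sigma2 alpha2 r2 S2 -> #|H2| = n.*2 ->
     code_of sigma1 alpha1 r1 S1 w -> code_of sigma2 alpha2 r2 S2 w ->
     iso_covered sigma1 alpha1 r1 S1 sigma2 alpha2 r2 S2) /\
  (* surjectivity onto code-shuffles of length 2n *)
  (0 < n -> forall w : seq sltr, code_shuffle w -> size w = n.*2 ->
     exists (H : finType) (sigma alpha : {perm H}) (r : H) (S : {set H}),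
       covered sigma alpha r S /\ #|H| = n.*2 /\ code_of sigma alpha r S w) /\
  (* the subwords are the codes of M_{|S} and of M*_{|Sbar} *)
  (forall (H : finType) (sigma alpha : {perm H}) (r : H) (S : {set H}) (w : seq sltr),
     covered sigma alpha r S -> #|H| = n.*2 -> code_of sigma alpha r S w ->
     ucode_of S (restr sigma S) (restr alpha S) (first_in sigma S r) (subA w) /\
     ucode_of (~: S) (restr (sigma \o alpha) (~: S)) (restr alpha (~: S))
              (first_in (sigma \o alpha) (~: S) r) (subB w)).
Proof.
split; first by move=> H sg al r S cov _; exact: part1.
split.
  move=> H1 H2 s1 a1 r1 S1 s2 a2 r2 S2 w c1 _ c2 _ w1 w2.
  exact: part2 c1 c2 w1 w2.
split; first by move=> n0 w cs sw; exact: (@part3 n n0 w cs sw).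
by move=> H sg al r S w cov _ cw; exact: part4 cov cw.
Qed.
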